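(* Let $X$ be a spectral space and let $Y\subseteq X$. (1) Suppose that $\sup(F)$ exists in $X$ for every nonempty finite subset $F\subseteq Y$. Then $\sup(Z)$ exists for every nonempty subset $Z\subseteq Y$, and $Y_\infty\subseteq\mathrm{Cl}^\mathrm{cons}(Y_f)$. (2) Suppose that $\inf(F)$ exists in $X$ for every nonempty finite subset $F\subseteq Y$. Then $\inf(Z)$ exists for every nonempty subset $Z\subseteq Y$, and $Y_{(\infty)}\subseteq\mathrm{Cl}^\mathrm{cons}(Y_{(f)})$.
   Context: A spectral space is a topological space homeomorphic to the prime spectrum of a commutative unitary ring with the Zariski topology. On a spectral space $X$ the specialization order is defined by $x\leq y$ iff $y\in\mathrm{Cl}(\{x\})$; it is a partial order, and $\sup$, $\inf$ refer to this order. The constructible topology on $X$ is the coarsest topology for which every open and quasi-compact subset of $X$ is clopen; $\mathrm{Cl}^\mathrm{cons}$ denotes closure in it. For $Y\subseteq X$: $Y_f$ is the set of all $\sup(F)$ with $F\subseteq Y$ nonempty finite (whenever the supremum exists), $Y_\infty$ the set of all existing $\sup(Z)$ with $\emptyset\neq Z\subseteq Y$; $Y_{(f)}$ and $Y_{(\infty)}$ are defined in the same way with infima instead of suprema. *)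

(* Defs.v *)
From HB Require Import structures.
From mathcomp Require Import all_boot all_order all_algebra.
From mathcomp Require Import all_classical all_reals all_analysis.
Set Implicit Arguments. Unset Strict Implicit. Unset Printing Implicit Defensive.
Import GRing.Theory.
Local Open Scope classical_set_scope.
Local Open Scope ring_scope.

Definition prime_ideal (R : comPzRingType) (P : set R) : Prop :=
  [/\ P 0,
      (forall a b, P a -> P b -> P (a - b)),
      (forall r a, P a -> P (r * a)),
      ~ P 1 &
      (forall a b, P (a * b) -> P a \/ P b)].

Definition spec (R : comPzRingType) := {P : set R | prime_ideal P}.

Definition zariski_open (R : comPzRingType) (U : set (spec R)) : Prop :=
  exists S : set R, U = [set p : spec R | ~ (S `<=` proj1_sig p)].

Definition spectral (X : topologicalType) : Prop :=
  exists (R : comPzRingType) (f : X -> spec R),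
    bijective f /\ (forall U : set X, open U <-> zariski_open (f @` U)).

Definition spec_le (X : topologicalType) (x y : X) : Prop :=
  closure [set x] y.

Definition is_sup (X : topologicalType) (Z : set X) (s : X) : Prop :=
  (forall z, Z z -> spec_le z s) /\
  (forall u, (forall z, Z z -> spec_le z u) -> spec_le s u).

Definition is_inf (X : topologicalType) (Z : set X) (s : X) : Prop :=
  (forall z, Z z -> spec_le s z) /\
  (forall u, (forall z, Z z -> spec_le u z) -> spec_le u s).

Definition Y_f (X : topologicalType) (Y : set X) : set X :=
  [set s | exists F : set X, [/\ finite_set F, F !=set0, F `<=` Y & is_sup F s]].
Definition Y_infty (X : topologicalType) (Y : set X) : set X :=
  [set s | exists Z : set X, [/\ Z !=set0, Z `<=` Y & is_sup Z s]].
Definition Y_inf_f (X : topologicalType) (Y : set X) : set X :=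
  [set s | exists F : set X, [/\ finite_set F, F !=set0, F `<=` Y & is_inf F s]].
Definition Y_inf_infty (X : topologicalType) (Y : set X) : set X :=
  [set s | exists Z : set X, [/\ Z !=set0, Z `<=` Y & is_inf Z s]].

Definition is_topology (X : Type) (T : set (set X)) : Prop :=
  [/\ T setT,
      (forall A B, T A -> T B -> T (A `&` B)) &
      (forall (I : Type) (A : I -> set X), (forall i, T (A i)) ->
         T (\bigcup_(i in [set: I]) A i))].

(* Open and quasi-compact subsets of X (compact in mathcomp-analysis is
   quasi-compactness, no separation assumed). *)
Definition open_qc (X : topologicalType) (U : set X) : Prop :=
  open U /\ compact U.

(* Open sets of the constructible topology: those belonging to every
   topology in which every open quasi-compact set is clopen, i.e. the
   coarsest such topology. *)
Definition cons_open (X : topologicalType) (A : set X) : Prop :=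
  forall T : set (set X), is_topology T ->
    (forall U, open_qc U -> T U /\ T (~` U)) -> T A.

Definition cons_closure (X : topologicalType) (Y : set X) : set X :=
  [set x | forall A, cons_open A -> A x -> A `&` Y !=set0].

(* Main.v *)
Require Import Defs.
From mathcomp Require Import all_boot all_order all_algebra.
From mathcomp Require Import all_classical all_reals all_analysis.
Local Open Scope classical_set_scope.
Set Implicit Arguments. Unset Strict Implicit.

Section Basics.
Variable X : topologicalType.

Lemma sle_refl (x : X) : spec_le x x.
Proof. exact: subset_closure. Qed.

Lemma sle_open (U : set X) x y : open U -> U y -> spec_le x y -> U x.
Proof.
move=> oU Uy /(_ U) []; first by apply: open_nbhs_nbhs; split.
by move=> z [/= -> ].
Qed.

Lemma sle_trans (x y z : X) : spec_le x y -> spec_le y z -> spec_le x z.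
Proof.
move=> xy yz; rewrite /spec_le.
have : closure [set y] `<=` closure [set x].
  rewrite [X in _ `<=` X](closure_id _).1; last exact: closed_closure.
  by apply: closureS => w ->.
by apply.
Qed.

Definition nb (s : X) (A : set X) := A s -> exists U V : set X,
  [/\ open U, open V, compact V, U s /\ ~ V s & U `&` ~` V `<=` A].

Lemma cons_open_nb s A : cons_open A -> nb s A.
Proof.
move=> cA; apply: cA.
- split.
  + move=> _; exists setT, set0; split; [exact: openT|exact: open0|exact: compact0|by split|by []].
  + move=> A1 A2 h1 h2 [/h1 [U1 [V1 [oU1 oV1 cV1 [U1s V1s] s1]]]
                      /h2 [U2 [V2 [oU2 oV2 cV2 [U2s V2s] s2]]]].
    exists (U1 `&` U2), (V1 `|` V2); split.
    * exact: openI.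
    * exact: openU.
    * exact: compactU.
    * by split; [split|case].
    * move=> x [[u1 u2] nV]; split; [apply: s1|apply: s2]; split => //.
      - by move=> ?; apply: nV; left.
      - by move=> ?; apply: nV; right.
  + move=> I B hB [i _ Bis]; have [U [V [oU oV cV [Us Vs] sUV]]] := hB i Bis.
    exists U, V; split => // x /sUV Ax; by exists i.
- move=> W [oW cW]; split.
  + move=> Ws; exists W, set0; split; [by []|exact: open0|exact: compact0|by split|].
    by move=> x [].
  + move=> Ws; exists setT, W; split; [exact: openT|by []|by []|by split|].
    by move=> x [].
Qed.
End Basics.

Lemma part1_cl (X : topologicalType) (Y Z : set X) (s : X) (U V : set X) :
  (forall F : set X, finite_set F -> F !=set0 -> F `<=` Y -> exists t, is_sup F t) ->
  Z !=set0 -> Z `<=` Y -> is_sup Z s -> open U -> open V -> compact V ->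
  U s -> ~ V s -> exists t, [/\ Y_f Y t, U t & ~ V t].
Proof.
move=> hyp [z0 Zz0] ZY [sub sl] oU oV cV Us Vs.
pose D := fun G : set X => [/\ finite_set G, G !=set0 & G `<=` Z].
pose Bs := fun G0 : set X => [set G | D G /\ G0 `<=` G].
pose Fl := filter_from D Bs.
pose P := fun (G : set X) v => exists t, is_sup G t /\ ~ spec_le t v.
have DY G : D G -> exists t, is_sup G t.
  by case=> fG nG GZ; apply: hyp => // x /GZ /ZY.
have FFl : Filter Fl.
  apply: filter_from_filter.
    exists [set z0]; split; [exact: finite_set1|by exists z0|by move=> x ->].
  move=> G1 G2 [f1 n1 s1] [f2 n2 s2]; exists (G1 `|` G2).
    split; [by rewrite finite_setU|by case: n1 => x ?; exists x; left|].
    by move=> x [/s1|/s2].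
  move=> G [DG sG]; split; split => //.
  - by move=> x ?; apply: sG; left.
  - by move=> x ?; apply: sG; right.
have cover : forall v, V v -> \forall v' \near v & G \near Fl, P G v'.
  move=> v Vv.
  have [G0 [DG0 PG0]] : exists G0, D G0 /\ P G0 v.
    apply: contrapT => nex; apply: Vs; apply: (sle_open oV Vv); apply: sl => z Zz.
    have Dz : D [set z] by split; [exact: finite_set1|by exists z|by move=> x ->].
    have [t [tub tl]] := DY _ Dz.
    apply: (sle_trans (tub z erefl)); apply: contrapT => ntv; apply: nex.
    by exists [set z]; split => //; exists t.
  case: PG0 => t0 [[t0ub t0l] nt0v].
  exists (~` closure [set t0], Bs G0); [split|]; rewrite /=.
  - apply: open_nbhs_nbhs; split => //; apply: closed_openC; exact: closed_closure.
  - by exists G0 => //; split => //.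
  - move=> [x' G] [/= Ax' [DG sG]]; have [tG [tGub tGl]] := DY _ DG.
    exists tG; split => //; move=> tx; apply: Ax'.
    apply: (sle_trans _ tx); apply: t0l => z /sG; exact: tGub.
have := (compact_near_coveringP V).1 cV (set X) Fl P FFl cover.
case=> G0 DG0 /(_ G0) /= hG0.
have VP := hG0 (conj DG0 (fun x (h : G0 x) => h)).
have [t [tub tl]] := DY _ DG0.
exists t; split.
- by case: DG0 => fG nG GZ; exists G0; split => // x /GZ /ZY.
- apply: (sle_open oU Us); case: DG0 => _ _ GZ; apply: tl => z /GZ Zz; exact: sub.
- move=> /VP [t' [[t'ub t'l] nt't]]; apply: nt't; exact: t'l.
Qed.
Import GRing.Theory.

Section Ring.
Local Open Scope ring_scope.
Variables (X : topologicalType) (R : comPzRingType) (f : X -> spec R).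
Hypothesis fbij : bijective f.
Hypothesis fop : forall U : set X, open U <-> zariski_open (f @` U).

Let P x : set R := proj1_sig (f x).
Let Pprime x : prime_ideal (P x) := proj2_sig (f x).

Let finj : injective f := bij_inj fbij.

Lemma sle_iff x y : spec_le x y <-> P x `<=` P y.
Proof.
split.
- move=> xy a Pxa; apply: contrapT => nPya.
  pose U := f @^-1` [set p : spec R | ~ [set a] `<=` proj1_sig p].
  have oU : open U.
    apply/fop; exists [set a]; apply: image_preimage.
    apply/seteqP; split => // q _; case: fbij => g fg gf; exists (g q) => //.
  have Ux : U x.
    apply: (sle_open oU _ xy); rewrite /U /=; move=> h; apply: nPya; exact: h.
  by apply: Ux => b ->.
- move=> xy B; rewrite nbhsE => -[U [oU Uy] UB].
  exists x; split => //; apply: UB.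
  have [S fU] := (fop U).1 oU.
  have : (f @` U) (f y) by exists y.
  rewrite fU /= => nSy.
  have : (f @` U) (f x) by rewrite fU /=; move=> h; apply: nSy => a /h; exact: xy.
  by case=> u Uu /finj <-.
Qed.

Lemma surj_pt (q : spec R) : exists x, f x = q.
Proof. by case: fbij => g fg gf; exists (g q); exact: gf. Qed.

Lemma pt_of (Q : set R) : prime_ideal Q -> exists x, P x = Q.
Proof. move=> pQ; have [x fx] := surj_pt (exist _ Q pQ); by exists x; rewrite /P fx. Qed.

Definition DD (Z G : set X) := [/\ finite_set G, G !=set0 & G `<=` Z].

Lemma DD1 (Z : set X) z : Z z -> DD Z [set z].
Proof. by move=> Zz; split; [exact: finite_set1|by exists z|by move=> x ->]. Qed.

Lemma DDU (Z G1 G2 : set X) : DD Z G1 -> DD Z G2 -> DD Z (G1 `|` G2).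
Proof.
move=> [f1 n1 s1] [f2 n2 s2]; split; [by rewrite finite_setU|by case: n1 => x ?; exists x; left|].
by move=> x [/s1|/s2].
Qed.

Lemma sup_mono (G1 G2 : set X) t1 t2 : is_sup G1 t1 -> is_sup G2 t2 -> G1 `<=` G2 -> P t1 `<=` P t2.
Proof. by move=> [_ l1] [u2 _] s12; apply/sle_iff; apply: l1 => z /s12; exact: u2. Qed.

Lemma inf_mono (G1 G2 : set X) t1 t2 : is_inf G1 t1 -> is_inf G2 t2 -> G1 `<=` G2 -> P t2 `<=` P t1.
Proof. by move=> [_ l1] [u2 _] s12; apply/sle_iff; apply: l1 => z /s12; exact: u2. Qed.

Lemma sup_exists (Y Z : set X) :
  (forall F : set X, finite_set F -> F !=set0 -> F `<=` Y -> exists t, is_sup F t) ->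
  Z !=set0 -> Z `<=` Y -> exists s, is_sup Z s.
Proof.
move=> hyp [z0 Zz0] ZY.
have DY G : DD Z G -> exists t, is_sup G t.
  by case=> fG nG GZ; apply: hyp => // x /GZ /ZY.
pose Q a := exists G t, [/\ DD Z G, is_sup G t & P t a].
have pQ : prime_ideal Q.
  split.
  - have [t st] := DY _ (DD1 Zz0); exists [set z0], t; split => //; first exact: DD1.
    by case: (Pprime t).
  - move=> a b [G1 [t1 [D1 s1 h1]]] [G2 [t2 [D2 s2 h2]]].
    have [t st] := DY _ (DDU D1 D2); exists (G1 `|` G2), t; split => //; first exact: DDU.
    case: (Pprime t) => _ hB _ _ _; apply: hB.
    + by apply: (sup_mono s1 st) => // x; left.
    + by apply: (sup_mono s2 st) => // x; right.
  - move=> r a [G [t [DG st h]]]; exists G, t; split => //.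
    by case: (Pprime t) => _ _ hM _ _; apply: hM.
  - case=> G [t [_ _ h]]; by case: (Pprime t) => _ _ _ n1 _; apply: n1.
  - move=> a b [G [t [DG st h]]]; case: (Pprime t) => _ _ _ _ hp.
    by case: (hp _ _ h) => ?; [left|right]; exists G, t.
have [s Ps] := pt_of pQ.
exists s; split.
- move=> z Zz; apply/sle_iff; rewrite Ps => a Pza.
  have [t st] := DY _ (DD1 Zz); exists [set z], t; split => //; first exact: DD1.
  by case: st => ub _; move/sle_iff: (ub z erefl); apply.
- move=> u ub; apply/sle_iff; rewrite Ps => a [G [t [[_ _ GZ] [_ tl] h]]].
  by move/sle_iff: (tl u (fun z Gz => ub z (GZ z Gz))); apply.
Qed.

Lemma inf_Q (Y Z : set X) :
  (forall F : set X, finite_set F -> F !=set0 -> F `<=` Y -> exists t, is_inf F t) ->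
  Z !=set0 -> Z `<=` Y ->
  exists s, is_inf Z s /\ forall a, (forall G t, DD Z G -> is_inf G t -> P t a) -> P s a.
Proof.
move=> hyp [z0 Zz0] ZY.
have DY G : DD Z G -> exists t, is_inf G t.
  by case=> fG nG GZ; apply: hyp => // x /GZ /ZY.
pose Q a := forall G t, DD Z G -> is_inf G t -> P t a.
have pQ : prime_ideal Q.
  split.
  - by move=> G t _ _; case: (Pprime t).
  - move=> a b ha hb G t DG st; case: (Pprime t) => _ hB _ _ _; apply: hB.
    + exact: (ha G t DG st).
    + exact: (hb G t DG st).
  - move=> r a ha G t DG st; case: (Pprime t) => _ _ hM _ _; apply: hM; exact: (ha G t DG st).
  - move=> h1; have [t st] := DY _ (DD1 Zz0).
    by case: (Pprime t) => _ _ _ n1 _; apply: n1; apply: h1 st; exact: DD1.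
  - move=> a b hab; have [Qa|nQa] := pselect (Q a); [by left|right].
    move=> G t DG st; apply: contrapT => nPtb; apply: nQa => G' t' DG' st'.
    have [t'' st''] := DY _ (DDU DG DG').
    case: (Pprime t'') => _ _ _ _ hp.
    case: (hp _ _ (hab _ _ (DDU DG DG') st'')) => h.
    + by apply: (inf_mono st' st'') => // x; right.
    + by exfalso; apply: nPtb; apply: (inf_mono st st'') => // x; left.
have [s Ps] := pt_of pQ.
exists s; split; last by rewrite Ps.
split.
- move=> z Zz; apply/sle_iff; rewrite Ps => a Qa.
  have [t st] := DY _ (DD1 Zz).
  by case: st (Qa _ _ (DD1 Zz) st) => ub _; move/sle_iff: (ub z erefl); apply.
- move=> u lb; apply/sle_iff; rewrite Ps => a Pua G t [_ _ GZ] [_ tl].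
  by move/sle_iff: (tl u (fun z Gz => lb z (GZ z Gz))); apply.
Qed.

Lemma inf_exists (Y Z : set X) :
  (forall F : set X, finite_set F -> F !=set0 -> F `<=` Y -> exists t, is_inf F t) ->
  Z !=set0 -> Z `<=` Y -> exists s, is_inf Z s.
Proof. by move=> hyp nZ ZY; have [s [? _]] := inf_Q hyp nZ ZY; exists s. Qed.

Lemma part2_cl (Y Z : set X) (s : X) (U V : set X) :
  (forall F : set X, finite_set F -> F !=set0 -> F `<=` Y -> exists t, is_inf F t) ->
  Z !=set0 -> Z `<=` Y -> is_inf Z s -> open U -> open V ->
  U s -> ~ V s -> exists t, [/\ Y_inf_f Y t, U t & ~ V t].
Proof.
move=> hyp nZ ZY [slb sl] oU oV Us Vs.
have [s' [[s'lb s'l] hs']] := inf_Q hyp nZ ZY.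
have s's : P s' `<=` P s by apply/sle_iff; apply: sl.
have [S fU] := (fop U).1 oU.
have : (f @` U) (f s) by exists s.
rewrite fU /= => nSs.
apply: contrapT => nex; apply: nSs => a Sa; apply: s's; apply: hs' => G t DG st.
apply: contrapT => nPta; apply: nex; exists t; split.
- by case: DG => fG nG GZ; exists G; split => // x /GZ /ZY.
- have : (f @` U) (f t) by rewrite fU /=; move=> h; apply: nPta; exact: h.
  by case=> u Uu /finj <-.
- move=> Vt; apply: Vs; apply: (sle_open oV Vt).
  by case: st => _ tl; apply: tl => z /(fun h => h) Gz; case: DG => _ _ GZ; exact: slb (GZ z Gz).
Qed.

End Ring.

Theorem theorem3p1 (X : topologicalType) (Y : set X) :
  spectral X ->
  ((forall F : set X, finite_set F -> F !=set0 -> F `<=` Y ->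
       exists s, is_sup F s) ->
     (forall Z : set X, Z !=set0 -> Z `<=` Y -> exists s, is_sup Z s) /\
     Y_infty Y `<=` cons_closure (Y_f Y)) /\
  ((forall F : set X, finite_set F -> F !=set0 -> F `<=` Y ->
       exists s, is_inf F s) ->
     (forall Z : set X, Z !=set0 -> Z `<=` Y -> exists s, is_inf Z s) /\
     Y_inf_infty Y `<=` cons_closure (Y_inf_f Y)).
Proof.
case=> R [f [fbij fop]]; split=> hyp; split.
- by move=> Z; apply: (sup_exists fbij fop hyp).
- move=> s [Z [nZ ZY sZ]] A /(@cons_open_nb _ s) nbA As.
  have [U [V [oU oV cV [Us Vs] sA]]] := nbA As.
  have [t [Yt Ut Vt]] := part1_cl hyp nZ ZY sZ oU oV cV Us Vs.
  by exists t; split => //; apply: sA.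
- by move=> Z; apply: (inf_exists fbij fop hyp).
- move=> s [Z [nZ ZY sZ]] A /(@cons_open_nb _ s) nbA As.
  have [U [V [oU oV cV [Us Vs] sA]]] := nbA As.
  have [t [Yt Ut Vt]] := part2_cl fbij fop hyp nZ ZY sZ oU oV Us Vs.
  by exists t; split => //; apply: sA.
Qed.
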